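(* The class PosLimSup is closed under $\min$, and the class AsLimInf is closed under $\max$.
   Context: A probabilistic weighted automaton over a finite alphabet $\Sigma$ is a tuple $A=(Q,\rho_I,\Sigma,\delta,\gamma)$ where $Q$ is a finite set of states, $\rho_I$ is a probability distribution on $Q$, $\delta:Q\times\Sigma\to\mathcal D(Q)$ assigns to each state and letter a probability distribution on $Q$, and $\gamma:Q\times\Sigma\times Q\to\mathbb Q$ is a weight function. A run over an infinite word $w=\sigma_1\sigma_2\dots$ is a sequence $r=q_0\sigma_1q_1\sigma_2\dots$ with $\rho_I(q_0)>0$ and $\delta(q_i,\sigma_{i+1})(q_{i+1})>0$ for all $i$; its weight sequence is $\gamma(r)=v_0v_1\dots$ with $v_i=\gamma(q_i,\sigma_{i+1},q_{i+1})$. For each $w$, the probabilities of finite run prefixes induce a probability measure $\mathbb P^A$ on runs over $w$. For a value function $\mathrm{Val}$, positive semantics: $L^{>0}_A(w)=\sup\{\eta\mid \mathbb P^A(\{r:\mathrm{Val}(\gamma(r))\ge\eta\})>0\}$; almost-sure semantics: $L^{=1}_A(w)=\sup\{\eta\mid \mathbb P^A(\{r:\mathrm{Val}(\gamma(r))\ge\eta\})=1\}$. $\mathsf{LimSup}(v)=\limsup_n v_n$, $\mathsf{LimInf}(v)=\liminf_n v_n$. PosLimSup is the class of $\mathsf{LimSup}$-automata under positive semantics; AsLimInf is the class of $\mathsf{LimInf}$-automata under almost-sure semantics. A class $\mathcal C$ is closed under $\max$ (resp. $\min$) if for any $A_1,A_2\in\mathcal C$ over the same alphabet there is $A\in\mathcal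 C$ with $L_A(w)=\max\{L_{A_1}(w),L_{A_2}(w)\}$ (resp. $\min$) for all words $w$. *)

(* Defs.v *)
From HB Require Import structures.
From mathcomp Require Import all_boot all_order all_algebra.
From mathcomp Require Import all_classical all_reals all_analysis.
Set Implicit Arguments.
Unset Strict Implicit.
Unset Printing Implicit Defensive.
Import Order.TTheory GRing.Theory Num.Theory.
Local Open Scope classical_set_scope.
Local Open Scope ring_scope.

Definition is_dist (Q : finType) (f : {ffun Q -> rat}) : Prop :=
  (forall q, 0 <= f q) /\ \sum_(q : Q) f q = 1.

(* Probabilistic weighted automaton A = (Q, rho_I, Sigma, delta, gamma). *)
Record PWA (Sigma : finType) := {
  state : finType;
  init : {ffun state -> rat};
  trans : state -> Sigma -> {ffun state -> rat};
  weight : state -> Sigma -> state -> rat;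
  init_is_dist : is_dist init;
  trans_is_dist : forall q a, is_dist (trans q a) }.

Section Runs.
Variables (Sigma : finType) (A : PWA Sigma).

Lemma state_inhabited : exists q : state A, init A q != 0.
Proof.
case: (init_is_dist A) => _ H.
apply/existsP; apply: contraT; rewrite negb_exists => /forallP H0.
move: H; rewrite big1 => [/esym/eqP|q _]; first by rewrite oner_eq0.
by apply/eqP; rewrite -[_ == _]negbK H0.
Qed.

Definition state_pt : state A := xchoose state_inhabited.

(* sequences of states q_0 q_1 ... (the letters are those of the fixed word) *)
Definition seqT := nat -> state A.
HB.instance Definition _ := gen_eqMixin seqT.
HB.instance Definition _ := gen_choiceMixin seqT.
HB.instance Definition _ := isPointed.Build seqT (fun _ => state_pt).

Definition cyl (n : nat) (p : nat -> state A) : set seqT :=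
  [set r | forall i, (i < n)%N -> r i = p i].

Definition cylinders : set (set seqT) := [set C | exists n p, C = cyl n p].

Definition RunSpace := @g_sigma_algebraType seqT cylinders.

Variable R : realType.

(* The word w = sigma_1 sigma_2 ... is w : nat -> Sigma with w i = sigma_(i+1). *)
Definition is_run_measure (w : nat -> Sigma)
    (P : probability RunSpace R) : Prop :=
  forall (n : nat) (p : nat -> state A),
    P (cyl n.+1 p) =
    (ratr (init A (p 0%N) * \prod_(i < n) @trans _ A (p i) (w i) (p i.+1)) : R)%:E.

Definition weight_seq (w : nat -> Sigma) (r : seqT) : nat -> \bar R :=
  fun i => (ratr (@weight _ A (r i) (w i) (r i.+1)) : R)%:E.

Definition LimSup (v : nat -> \bar R) : \bar R := limn_esup v.
Definition LimInf (v : nat -> \bar R) : \bar R := limn_einf v.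

Definition L_pos (Val : (nat -> \bar R) -> \bar R) (w : nat -> Sigma) : \bar R :=
  ereal_sup [set eta%:E | eta in
    [set eta : R | forall P : probability RunSpace R, is_run_measure w P ->
       (0 < P [set r : RunSpace | (eta%:E <= Val (weight_seq w r))%E])%E]].

Definition L_as (Val : (nat -> \bar R) -> \bar R) (w : nat -> Sigma) : \bar R :=
  ereal_sup [set eta%:E | eta in
    [set eta : R | forall P : probability RunSpace R, is_run_measure w P ->
       P [set r : RunSpace | (eta%:E <= Val (weight_seq w r))%E] = 1%E]].

End Runs.

Definition L_PosLimSup (R : realType) (Sigma : finType) (A : PWA Sigma)
  (w : nat -> Sigma) : \bar R := L_pos A (@LimSup R) w.
Definition L_AsLimInf (R : realType) (Sigma : finType) (A : PWA Sigma)
  (w : nat -> Sigma) : \bar R := L_as A (@LimInf R) w.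

(* Main.v *)
Require Import Defs.
From HB Require Import structures.
From mathcomp Require Import all_boot all_order all_algebra.
From mathcomp Require Import all_classical all_reals all_analysis.
From mathcomp Require Import ring.
Set Implicit Arguments.
Unset Strict Implicit.
Unset Printing Implicit Defensive.
Import Order.TTheory GRing.Theory Num.Theory.
Local Open Scope classical_set_scope.
Local Open Scope ring_scope.

Section FinVal.
Variable R : realType.

Lemma limn_esup_inf (u : (\bar R)^nat) :
  limn_esup u = ereal_inf (range (esups u)).
Proof. by rewrite limn_esup_lim; apply: cvg_lim => //; exact: cvg_esups_inf. Qed.

Lemma limsup_fin (T : finType) (f : nat -> T) (val : T -> R) (eta : R) :
  (eta%:E <= limn_esup (fun n => (val (f n))%:E))%E <->
  (forall N, exists2 n, (N <= n)%N & eta <= val (f n)).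
Proof.
rewrite limn_esup_inf; split.
  move=> H N; apply: contrapT => HN.
  have HN' : forall n, (N <= n)%N -> val (f n) < eta.
    move=> n Nn; rewrite ltNge; apply/negP => He; apply: HN; by exists n.
  pose M := \big[Order.max/(eta - 1)]_(t : T | val t < eta) val t.
  have MLt : M < eta.
    rewrite /M; apply: (big_ind (fun x => x < eta)) => //.
    - by rewrite ltrBlDr ltrDl.
    - by move=> x y xe ye; rewrite gt_max xe ye.
  have : (esups (fun n => (val (f n))%:E) N <= M%:E)%E.
    rewrite /esups /=; apply: ub_ereal_sup => _ [n /= Nn <-].
    rewrite lee_fin.
    exact: (@le_bigmax_cond _ _ _ (eta - 1) (f n) (fun t => val t < eta) val (HN' n Nn)).
  move=> HM; have : (eta%:E <= M%:E)%E.
    apply: (le_trans H); apply: (le_trans _ HM).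
    by apply: ereal_inf_lbound; exists N.
  by rewrite lee_fin leNgt MLt.
move=> H; apply: le_ereal_inf_tmp => _ [N _ <-].
have [n Nn en] := H N.
apply: (@le_trans _ _ (val (f n))%:E); first by rewrite lee_fin.
by apply: ereal_sup_ubound; exists n.
Qed.

Lemma limsup_fin_lt (T : finType) (f : nat -> T) (val : T -> R) (eta : R) :
  (eta%:E < limn_esup (fun n => (val (f n))%:E))%E <->
  (forall N, exists2 n, (N <= n)%N & eta < val (f n)).
Proof.
split.
  move=> H N; apply: contrapT => HN.
  have HN' : forall n, (N <= n)%N -> val (f n) <= eta.
    move=> n Nn; rewrite leNgt; apply/negP => He; apply: HN; by exists n.
  have : (limn_esup (fun n => (val (f n))%:E) <= eta%:E)%E.
    rewrite limn_esup_inf; apply: (@le_trans _ _ (esups (fun n => (val (f n))%:E) N)).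
      by apply: ereal_inf_lbound; exists N.
    rewrite /esups /=; apply: ub_ereal_sup => _ [n /= Nn <-].
    by rewrite lee_fin HN'.
  by rewrite leNgt H.
move=> H.
have [n0 _ e0] := H 0%N.
pose m := \big[Order.min/val (f n0)]_(t : T | eta < val t) val t.
have em : eta < m.
  rewrite /m; apply: (big_ind (fun x => eta < x)) => //.
  by move=> x y xe ye; rewrite lt_min xe ye.
apply: (@lt_le_trans _ _ m%:E); first by rewrite lte_fin.
apply/limsup_fin => N; have [n Nn en] := H N; exists n => //.
exact: (@bigmin_le_cond _ _ _ (val (f n0)) (f n) (fun t => eta < val t) val en).
Qed.

Lemma liminf_fin (T : finType) (f : nat -> T) (val : T -> R) (eta : R) :
  (eta%:E <= limn_einf (fun n => (val (f n))%:E))%E <->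
  (exists N, forall n, (N <= n)%N -> eta <= val (f n)).
Proof.
have E : limn_einf (fun n => (val (f n))%:E) =
   (- limn_esup (fun n => ((fun t => - val t) (f n))%:E))%E.
  by rewrite /limn_einf; congr (- limn_esup _)%E; apply/funext => n.
rewrite E leeNr -EFinN; split.
  move=> H; apply: contrapT => HN.
  have : ((- eta)%:E < limn_esup (fun n => ((fun t => - val t) (f n))%:E))%E.
    apply: (proj2 (limsup_fin_lt f (fun t => - val t) (- eta))) => N; apply: contrapT => HN'; apply: HN; exists N => n Nn.
    rewrite leNgt; apply/negP => vl; apply: HN'; exists n => //.
    by rewrite ltrN2.
  by rewrite ltNge H.
move=> [N HN]; rewrite leNgt; apply/negP.
move=> /(proj1 (limsup_fin_lt f (fun t => - val t) (- eta))) H.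
have [n Nn] := H N; rewrite ltrN2 ltNge; by rewrite HN.
Qed.

End FinVal.

Section Gen.
Variables (Sigma : finType) (A : PWA Sigma) (R : realType).
Local Notation S := (state A).
Local Notation RS := (RunSpace A).

Definition ext k (f : {ffun 'I_k -> S}) : nat -> S :=
  fun i => if @insub _ (fun i => (i < k)%N) 'I_k i is Some j then f j else state_pt A.

Definition prefix k (r : seqT A) : {ffun 'I_k -> S} := [ffun i => r (nat_of_ord i)].

Lemma cyl_meas n p : measurable (cyl n p : set RS).
Proof. by apply: sub_sigma_algebra; exists n, p. Qed.

Lemma cyl_ext k f (r : seqT A) : cyl k (ext f) r <-> prefix k r = f.
Proof.
split.
  move=> H; apply/ffunP => i; rewrite ffunE H // /ext valK //.
move=> <- i ik; rewrite /ext insubT ffunE //.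
Qed.

Lemma prefix_meas k (Q : pred {ffun 'I_k -> S}) :
  measurable ([set r | Q (prefix k r)] : set RS).
Proof.
have -> : ([set r | Q (prefix k r)] : set RS) =
   \big[setU/set0]_(f <- enum {ffun 'I_k -> S} | Q f) cyl k (ext f).
  apply/seteqP; split => r /=.
    move=> Qr; rewrite -bigcup_seq_cond; exists (prefix k r).
      by apply/andP; split; [rewrite mem_enum|].
    exact/cyl_ext.
  rewrite -bigcup_seq_cond => -[f /andP[_ Qf]] /cyl_ext ->; exact: Qf.
by apply: bigsetU_measurable => f _; exact: cyl_meas.
Qed.

Lemma coord_meas n (Q : rel S) : measurable ([set r | Q (r n) (r n.+1)] : set RS).
Proof.
have -> : ([set r | Q (r n) (r n.+1)] : set RS) =
  [set r | (fun f : {ffun 'I_n.+2 -> S} => Q (f (inord n)) (f (inord n.+1))) (prefix n.+2 r)].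
  apply/seteqP; split => r /=; rewrite !ffunE !inordK //.
exact: (@prefix_meas n.+2 (fun f : {ffun 'I_n.+2 -> S} => Q (f (inord n)) (f (inord n.+1)))).
Qed.

Definition Gsys : set (set RS) := @cylinders _ A `|` [set set0].

Lemma cyl0 p : @cyl _ A 0 p = setT.
Proof. by apply/seteqP; split => r //= _ i. Qed.

Lemma cylI_sub n m p q : (n <= m)%N -> Gsys (@cyl _ A n p `&` cyl m q).
Proof.
move=> nm.
have [H|H] := boolP [forall i : 'I_n, p i == q i].
  left; exists m, q; apply/seteqP; split => r.
    by case.
  move=> rq; split => // i ilt.
  rewrite rq ?(leq_trans ilt nm) //.
  by move/forallP : H => /(_ (Ordinal ilt)) /eqP.
right; apply/seteqP; split => r // [rp rq].
move: H; rewrite negb_forall => /existsP [i].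
by rewrite -(rp i (ltn_ord i)) -(rq i (leq_trans (ltn_ord i) nm)) eqxx.
Qed.

Lemma Gsys_setI : setI_closed Gsys.
Proof.
move=> B C [[n [p ->]]|->] [[m [q ->]]|->]; try by (right; rewrite ?setI0 ?set0I).
have [nm|mn] := leqP n m; first exact: cylI_sub.
by rewrite setIC; apply: cylI_sub; exact: ltnW.
Qed.

Lemma measurable_RS : @measurable _ RS = <<s Gsys >>.
Proof.
apply/seteqP; split.
  apply: sub_sigma_algebra2 => B HB; by left.
apply: smallest_sub; first exact: smallest_sigma_algebra.
move=> B [HB|->]; first exact: sub_sigma_algebra.
exact: measurable0.
Qed.

Lemma run_measure_unique (w : nat -> Sigma) (P P' : probability RS R) :
  is_run_measure w P -> is_run_measure w P' ->
  forall B, measurable B -> P B = P' B.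
Proof.
move=> HP HP'.
apply: (measure_unique Gsys (fun _ => setT)).
- exact: measurable_RS.
- exact: Gsys_setI.
- by move=> _; left; exists 0%N, (fun _ => state_pt A); rewrite cyl0.
- by rewrite bigcup_const.
- move=> B [[[|n] [p ->]]|->].
  + rewrite cyl0; exact: (etrans (probability_setT P) (esym (probability_setT P'))).
  + exact: (etrans (HP n p) (esym (HP' n p))).
  + by rewrite !measure0.
- by move=> _; apply: (@le_lt_trans _ _ 1%E); [exact: probability_le1|exact: ltry].
Qed.

Definition Esup (w : nat -> Sigma) (eta : R) : set RS :=
  [set r | (eta%:E <= LimSup (weight_seq R w r))%E].
Definition Einf (w : nat -> Sigma) (eta : R) : set RS :=
  [set r | (eta%:E <= LimInf (weight_seq R w r))%E].

Definition wval (t : S * Sigma * S) : R := ratr (weight t.1.1 t.1.2 t.2).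

Lemma Esup_io w eta (r : seqT A) : Esup w eta r <->
  (forall N, exists2 n, (N <= n)%N & eta <= wval (r n, w n, r n.+1)).
Proof. exact: (limsup_fin (fun n => (r n, w n, r n.+1)) wval eta). Qed.

Lemma Einf_ev w eta (r : seqT A) : Einf w eta r <->
  (exists N, forall n, (N <= n)%N -> eta <= wval (r n, w n, r n.+1)).
Proof. exact: (liminf_fin (fun n => (r n, w n, r n.+1)) wval eta). Qed.

Lemma Esup_meas w eta : measurable (Esup w eta).
Proof.
have -> : Esup w eta = \bigcap_N \bigcup_k
   [set r : RS | (fun a b => eta <= wval (a, w (N + k)%N, b)) (r (N + k)%N) (r (N + k)%N.+1)].
  apply/seteqP; split => r.
    move/Esup_io => H N _; have [n Nn en] := H N.
    by exists (n - N)%N => //=; rewrite subnKC.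
  move=> H; apply/Esup_io => N; have [k _ /= Hk] := H N I.
  by exists (N + k)%N => //; rewrite leq_addr.
apply: bigcapT_measurable => N; apply: bigcupT_measurable => k.
exact: (coord_meas (N + k) (fun a b => eta <= wval (a, w (N + k)%N, b))).
Qed.

Lemma Einf_meas w eta : measurable (Einf w eta).
Proof.
have -> : Einf w eta = \bigcup_N \bigcap_k
   [set r : RS | (fun a b => eta <= wval (a, w (N + k)%N, b)) (r (N + k)%N) (r (N + k)%N.+1)].
  apply/seteqP; split => r.
    move/Einf_ev => [N H]; exists N => // k _ /=; apply: H; exact: leq_addr.
  move=> [N _ H]; apply/Einf_ev; exists N => n Nn.
  have := H (n - N)%N I; by rewrite /= subnKC.
apply: bigcupT_measurable => N; apply: bigcapT_measurable => k.
exact: (coord_meas (N + k) (fun a b => eta <= wval (a, w (N + k)%N, b))).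
Qed.

Lemma L_pos_char w (P0 : probability RS R) : is_run_measure w P0 ->
  L_pos A (@LimSup R) w =
  ereal_sup [set eta%:E | eta in [set eta | (0 < P0 (Esup w eta))%E]].
Proof.
move=> H0; rewrite /L_pos; congr ereal_sup; congr image.
apply/funext => eta; apply/propext; split.
  by move=> /(_ P0 H0).
move=> Hp P HP; rewrite -(run_measure_unique H0 HP) //; exact: Esup_meas.
Qed.

Lemma L_as_char w (P0 : probability RS R) : is_run_measure w P0 ->
  L_as A (@LimInf R) w =
  ereal_sup [set eta%:E | eta in [set eta | P0 (Einf w eta) = 1%E]].
Proof.
move=> H0; rewrite /L_as; congr ereal_sup; congr image.
apply/funext => eta; apply/propext; split.
  by move=> /(_ P0 H0).
move=> Hp P HP; rewrite -(run_measure_unique H0 HP) //; exact: Einf_meas.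
Qed.

End Gen.

Section Dist.
Variables (R : realType) (S : finType) (d : {ffun S -> rat}).
Hypothesis hd : is_dist d.

Definition pr (q : S) : R := ratr (d q).
Definition cc (k : nat) : R := \sum_(q : S | (enum_rank q < k)%N) pr q.
Definition cum (q : S) : R := cc (enum_rank q).

Lemma pr_ge0 q : 0 <= pr q.
Proof. by rewrite /pr ler0q; case: hd. Qed.

Lemma sum_sub (P Q : pred S) (F : S -> R) : (forall q, 0 <= F q) ->
  (forall q, P q -> Q q) -> \sum_(q | P q) F q <= \sum_(q | Q q) F q.
Proof.
move=> F0 PQ; rewrite [X in X <= _]big_mkcond [X in _ <= X]big_mkcond /=.
apply: ler_sum => q _; case: ifP => Pq; first by rewrite PQ.
by case: ifP.
Qed.

Lemma cc_mono k k' : (k <= k')%N -> cc k <= cc k'.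
Proof. move=> kk; apply: sum_sub => [q|q qk]; [exact: pr_ge0|exact: leq_trans qk kk]. Qed.

Lemma cc0 : cc 0 = 0.
Proof. by rewrite /cc big_pred0. Qed.

Lemma cc_ge0 k : 0 <= cc k.
Proof. by rewrite -cc0; apply: cc_mono. Qed.

Lemma ccT : cc #|S| = 1.
Proof.
rewrite /cc (eq_bigl xpredT); last by move=> q; rewrite ltn_ord.
case: hd => _ H; by rewrite /pr -rmorph_sum /= H rmorph1.
Qed.

Lemma cc_le1 k : cc k <= 1.
Proof.
rewrite -ccT /cc; apply: sum_sub => [q|q _]; [exact: pr_ge0|exact: ltn_ord].
Qed.

Lemma ccS q : cc (enum_rank q).+1 = cum q + pr q.
Proof.
rewrite /cc /cum (bigD1 q) //= addrC; congr (_ + _).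
apply: eq_bigl => q'; rewrite ltnS /cc.
case: (eqVneq q' q) => [->|nq]; first by rewrite ltnn leqnn.
rewrite andbT leq_eqVlt; case: eqP => // /val_inj /enum_rank_inj => E.
by rewrite E eqxx in nq.
Qed.

Lemma ivt_nat (f : nat -> R) t N : f 0%N <= t -> t < f N ->
  exists2 k, (k < N)%N & f k <= t < f k.+1.
Proof.
elim: N => [|N IH] f0 tN; first by rewrite ltNge f0 in tN.
have [tN'|tN'] := ltP t (f N).
  by have [k kN Hk] := IH f0 tN'; exists k => //; exact: ltnW.
by exists N => //; rewrite tN' tN.
Qed.

Definition choose (s0 : S) (t : R) : S :=
  odflt s0 [pick q | (cum q <= t) && (t < cum q + pr q)].

Lemma in_unique q q' t : cum q <= t < cum q + pr q ->
  cum q' <= t < cum q' + pr q' -> q = q'.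
Proof.
have key : forall q q', (enum_rank q < enum_rank q')%N ->
    cum q <= t < cum q + pr q -> cum q' <= t < cum q' + pr q' -> False.
  move=> a b ab /andP[_ ta] /andP[bt _].
  have : cc (enum_rank a).+1 <= cc (enum_rank b) by apply: cc_mono.
  rewrite ccS /cum => H; have := lt_le_trans ta H; by rewrite ltNge bt.
move=> H H'; have [ab|ba|E] := ltngtP (enum_rank q) (enum_rank q').
- by case: (key _ _ ab H H').
- by case: (key _ _ ba H' H).
- exact/enum_rank_inj/val_inj.
Qed.

Lemma choose_spec s0 t q : 0 <= t < 1 ->
  (choose s0 t = q) <-> (cum q <= t < cum q + pr q).
Proof.
move=> /andP[t0 t1].
have [k kN /andP[ck tk]] : exists2 k, (k < #|S|)%N & cc k <= t < cc k.+1.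
  by apply: ivt_nat; rewrite ?cc0 ?ccT.
pose q0 := enum_val (Ordinal kN).
have Hq0 : cum q0 <= t < cum q0 + pr q0.
  by rewrite -ccS /cum /q0 enum_valK /= ck tk.
rewrite /choose; case: pickP => [q' Hq'|H]; last by move: (H q0); rewrite Hq0.
split => [<-|Hq]; [exact: Hq'|exact: in_unique Hq' Hq].
Qed.

Definition resc (s0 : S) (t : R) : R := (t - cum (choose s0 t)) / pr (choose s0 t).

Lemma step_iff s0 q x y t : 0 <= x -> x <= y -> y <= 1 ->
  (0 <= t < 1 /\ choose s0 t = q /\ x <= resc s0 t < y) <->
  (cum q + pr q * x <= t < cum q + pr q * y).
Proof.
move=> x0 xy y1; split.
  move=> [t01 [cq /andP[xr ry]]].
  have := (choose_spec s0 q t01).1 cq => /andP[ct tc].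
  have pq : 0 < pr q by rewrite -(ltrD2l (cum q)) addr0 (le_lt_trans ct tc).
  move: xr ry; rewrite /resc cq ler_pdivlMr // ltr_pdivrMr // => xr ry.
  by rewrite -lerBrDl -ltrBlDl mulrC xr mulrC ry.
move=> /andP[lo hi].
have pq : 0 < pr q.
  rewrite lt_def pr_ge0 andbT; apply/eqP => p0.
  by move: (le_lt_trans lo hi); rewrite p0 !mul0r ltxx.
have cq0 : 0 <= cum q by exact: cc_ge0.
have c1 : cum q + pr q <= 1 by rewrite -ccS cc_le1.
have t0 : 0 <= t.
  by apply: le_trans lo; apply: addr_ge0 => //; apply: mulr_ge0 => //; exact: ltW.
have t1 : t < 1.
  apply: (lt_le_trans hi); apply: le_trans c1; rewrite lerD2l.
  by rewrite -{2}(mulr1 (pr q)) ler_wpM2l // ltW.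
have t01 : 0 <= t < 1 by rewrite t0 t1.
have ctq : cum q <= t < cum q + pr q.
  apply/andP; split.
    apply: le_trans lo; rewrite lerDl; apply: mulr_ge0 => //; exact: ltW.
  apply: (lt_le_trans hi); rewrite lerD2l.
  by rewrite -{2}(mulr1 (pr q)) ler_wpM2l // ltW.
have cq := (choose_spec s0 q t01).2 ctq.
split => //; split => //.
rewrite /resc cq ler_pdivlMr // ltr_pdivrMr // lerBrDl ltrBlDl.
by rewrite mulrC lo mulrC hi.
Qed.

Lemma resc01 s0 t : 0 <= t < 1 -> 0 <= resc s0 t < 1.
Proof.
move=> t01; set q := choose s0 t.
have := (choose_spec s0 q t01).1 erefl.
move=> H; have H' : cum q + pr q * 0 <= t < cum q + pr q * 1 by rewrite mulr0 addr0 mulr1.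
by have [_ [_ ->]] := (step_iff s0 q t (lexx 0) ler01 (lexx 1)).2 H'.
Qed.

End Dist.

Section Decoder.
Variables (Sigma : finType) (A : PWA Sigma) (R : realType).
Local Notation S := (state A).
Local Notation s0 := (state_pt A).

Definition stepd (qt : S * R) (a : Sigma) : S * R :=
  (choose (@trans _ A qt.1 a) s0 qt.2, resc (@trans _ A qt.1 a) s0 qt.2).

Fixpoint decg (d0 : {ffun S -> rat}) (w : nat -> Sigma) (t : R) (n : nat) : S * R :=
  match n with
  | 0%N => (choose d0 s0 t, resc d0 s0 t)
  | n.+1 => stepd (decg d0 w t n) (w n)
  end.

Lemma decg_shift d0 w t n :
  decg d0 w t n.+1 =
  decg (@trans _ A (choose d0 s0 t) (w 0%N)) (fun i => w i.+1) (resc d0 s0 t) n.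
Proof.
elim: n => [|n IH]; first by [].
transitivity (stepd (decg d0 w t n.+1) (w n.+1)); first by [].
by rewrite IH.
Qed.

Lemma decg01 d0 w t n : is_dist d0 -> 0 <= t < 1 -> 0 <= (decg d0 w t n).2 < 1.
Proof.
move=> hd t01; elim: n => [|n IH] /=; first exact: resc01.
by apply: resc01 => //; exact: trans_is_dist.
Qed.

Definition beta (d0 : {ffun S -> rat}) (w : nat -> Sigma) (p : nat -> S) (n : nat) : R :=
  ratr (d0 (p 0%N) * \prod_(i < n) @trans _ A (p i) (w i) (p i.+1)).

Lemma beta_ge0 d0 w p n : is_dist d0 -> 0 <= beta d0 w p n.
Proof.
move=> [h0 _]; rewrite /beta ler0q mulr_ge0 //; apply: prodr_ge0 => i _.
by case: (trans_is_dist (p i) (w i)).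
Qed.

Lemma decg_interval n : forall d0 w p, is_dist d0 ->
  exists al : R, [/\ 0 <= al, al + beta d0 w p n <= 1 &
   forall x y t, 0 <= x -> x <= y -> y <= 1 ->
   ((0 <= t < 1 /\ (forall i, (i <= n)%N -> (decg d0 w t i).1 = p i) /\
      x <= (decg d0 w t n).2 < y) <->
    (al + beta d0 w p n * x <= t < al + beta d0 w p n * y))].
Proof.
elim: n => [|n IH] d0 w p hd.
  exists (cum R d0 (p 0%N)); split.
  - exact: cc_ge0.
  - by rewrite /beta big_ord0 mulr1 -/(pr R d0 (p 0%N)) -ccS // cc_le1.
  move=> x y t x0 xy y1; rewrite /beta big_ord0 mulr1 -/(pr R d0 (p 0%N)).
  rewrite -(step_iff hd s0 _ t x0 xy y1); split.
    move=> [t01 [H xr]]; split => //; split => //; exact: (H 0%N).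
  move=> [t01 [H xr]]; split => //; split => // -[|i] // _.
set q0 := p 0%N; set d' := @trans _ A q0 (w 0%N).
have hd' : is_dist d' by exact: trans_is_dist.
have [al' [al0 al1 Hal]] := IH d' (fun i => w i.+1) (fun i => p i.+1) hd'.
set b' := beta d' (fun i => w i.+1) (fun i => p i.+1) n.
have b0 : 0 <= b' by exact: beta_ge0.
have Eb : beta d0 w p n.+1 = pr R d0 q0 * b'.
  by rewrite /beta big_ord_recl /= -rmorphM /= mulrA.
have pq0 := pr_ge0 R hd q0.
exists (cum R d0 q0 + pr R d0 q0 * al'); split.
- by apply: addr_ge0; [exact: cc_ge0|exact: mulr_ge0].
- rewrite Eb -addrA -mulrDr; apply: le_trans (_ : cum R d0 q0 + pr R d0 q0 <= 1).
    by rewrite lerD2l ler_piMr.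
  by rewrite -ccS // cc_le1.
move=> x y t x0 xy y1.
have x'0 : 0 <= al' + b' * x by apply: addr_ge0 => //; exact: mulr_ge0.
have x'y' : al' + b' * x <= al' + b' * y by rewrite lerD2l ler_wpM2l.
have y'1 : al' + b' * y <= 1.
  by apply: le_trans al1; rewrite lerD2l ler_piMr.
have E1 : forall z, cum R d0 q0 + pr R d0 q0 * al' + pr R d0 q0 * b' * z =
   cum R d0 q0 + pr R d0 q0 * (al' + b' * z).
  by move=> z; rewrite mulrDr mulrA addrA.
rewrite Eb !E1  -(step_iff hd s0 _ t x'0 x'y' y'1).
split.
  move=> [t01 [H xr]].
  have c0 : choose d0 s0 t = q0 by exact: (H 0%N).
  split => //; split => //.
  have t'01 : 0 <= resc d0 s0 t < 1 by exact: resc01.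
  apply/(Hal x y _ x0 xy y1).1; split => //; split.
    by move=> i ni; rewrite /d' -c0 -decg_shift; exact: H.
  by rewrite /d' -c0 -decg_shift.
move=> [t01 [c0 H]].
have := (Hal x y _ x0 xy y1).2 H => -[t'01 [Hi xr]].
split => //; split.
  move=> [|i] ni; first exact: c0.
  rewrite decg_shift c0; exact: Hi.
by rewrite decg_shift c0.
Qed.

End Decoder.

Section Exist.
Variable R : realType.

Definition clamp (u : R) : R := if (0 <= u) && (u < 1) then u else 0.

Lemma clamp01 u : 0 <= clamp u < 1.
Proof. by rewrite /clamp; case: ifP => // _; rewrite lexx ltr01. Qed.

Lemma clamp_pre (X : set (measurableTypeR R)) : measurable (X `&` `[0, 1[%classic) ->
  measurable ([set u | X (clamp u)] : set (measurableTypeR R)).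
Proof.
move=> mX.
have -> : [set u | X (clamp u)] =
  (X `&` `[0, 1[%classic) `|` (~` `[0, 1[%classic `&` [set _ | X 0]).
  apply/seteqP; split => u /=.
    rewrite /clamp; case: ifPn => H Xu.
      by left; split => //; rewrite /= in_itv /=.
    by right; split => //; rewrite /= in_itv /=; apply/negP.
  case => [[Xu Hu]|[Hu X0]]; rewrite /clamp.
    by move: Hu; rewrite /= in_itv /= => ->.
  by move: Hu; rewrite /= in_itv /= => /negP/negbTE ->.
apply: measurableU => //; apply: measurableI; first exact: measurableC.
by case: (pselect (X 0)) => X0; [rewrite (_ : [set _ | X 0] = setT) //|
  rewrite (_ : [set _ | X 0] = set0) //]; apply/seteqP; split.
Qed.

Lemma m01 : measurable (`[0, 1[%classic : set (measurableTypeR R)).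
Proof. exact: measurable_itv. Qed.

Definition Q0 := mrestr (@lebesgue_measure R) m01.

Lemma Q0_itv a b : 0 <= a -> a <= b -> b <= 1 -> Q0 `[a, b[%classic = (b - a)%:E.
Proof.
move=> a0 ab b1; rewrite /Q0 /mrestr setIidl.
  rewrite lebesgue_measure_itv /= lte_fin.
  case: (ltgtP a b) ab => //.
  by move=> -> _; rewrite subrr.
move=> x /=; rewrite !in_itv /= => /andP[ax xb].
by rewrite (le_trans a0 ax) (lt_le_trans xb b1).
Qed.

Lemma Q0T : Q0 setT = 1%E.
Proof.
rewrite /Q0 /mrestr setTI (_ : 1%E = (1 - 0)%:E); last by rewrite subr0.
by rewrite -Q0_itv // /Q0 /mrestr setIid.
Qed.

Lemma Q0_clamp (X : set (measurableTypeR R)) : Q0 [set u | X (clamp u)] = Q0 X.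
Proof.
rewrite /Q0 /mrestr; congr (lebesgue_measure _); apply/seteqP; split => u /=;
  rewrite in_itv /= => -[Xu Hu]; split; rewrite /= ?in_itv //=;
  by move: Xu; rewrite /clamp Hu.
Qed.

HB.instance Definition _ := Measure.on Q0.
HB.instance Definition _ := Measure_isProbability.Build _ _ R Q0 Q0T.

End Exist.

Section ExistA.
Variables (Sigma : finType) (A : PWA Sigma) (R : realType) (w : nat -> Sigma).
Local Notation S := (state A).
Local Notation RS := (RunSpace A).

Definition Dec (u : measurableTypeR R) : RS := fun i => (decg (init A) w (clamp u) i).1.

Lemma Dec_pre n p : exists2 al : R, 0 <= al /\ al + beta R (init A) w p n <= 1 &
  Dec @^-1` (cyl n.+1 p) = [set u | `[al, al + beta R (init A) w p n[%classic (clamp u)].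
Proof.
have [al [al0 al1 H]] := decg_interval R n w p (init_is_dist A).
exists al => //; apply/seteqP; split => u /=.
  move=> Hu; have := (H 0 1 (clamp u) (lexx 0) ler01 (lexx 1)).1.
  rewrite mulr0 addr0 mulr1 /= in_itv /= => ->//; split; first exact: clamp01.
  split; first by move=> i ni; apply: Hu.
  exact: (decg01 w n (init_is_dist A) (clamp01 u)).
rewrite in_itv /= => Hu.
have := (H 0 1 (clamp u) (lexx 0) ler01 (lexx 1)).2.
rewrite mulr0 addr0 mulr1 => /(_ Hu) [_ [Hi _]] i ni; exact: Hi.
Qed.

Lemma Dec_meas : measurable_fun setT Dec.
Proof.
apply: (@measurability _ _ _ _ setT Dec (@cylinders _ A)); first by [].
move=> _ [B [n [p ->]] <-]; rewrite setTI.
case: n => [|n].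
  by rewrite cyl0 preimage_setT.
have [al _ ->] := Dec_pre n p.
apply: clamp_pre; apply: measurableI => //; exact: measurable_itv.
Qed.

HB.instance Definition _ := isMeasurableFun.Build _ _ _ _ Dec Dec_meas.

Lemma run_measure_exists : exists P : probability RS R, is_run_measure w P.
Proof.
exists (distribution (@Q0 R) [mfun of Dec]) => n p.
change (@Q0 R (Dec @^-1` cyl n.+1 p) =
  (ratr (init A (p 0%N) * \prod_(i < n) @trans _ A (p i) (w i) (p i.+1)))%:E).
have [al [al0 al1] ->] := Dec_pre n p.
rewrite Q0_clamp Q0_itv //.
- by rewrite addrC addKr.
- by rewrite lerDl; apply: beta_ge0; exact: init_is_dist.
Qed.

End ExistA.

Definition io (P : nat -> Prop) := forall N, exists2 n, (N <= n)%N & P n.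

Lemma pigeon (T : finType) (Q : nat -> T -> Prop) :
  io (fun n => exists t, Q n t) -> exists t, io (fun n => Q n t).
Proof.
move=> H; apply: contrapT => Hn.
have Hs : forall s : seq T, exists N, forall t, t \in s -> forall n, (N <= n)%N -> ~ Q n t.
  elim => [|t s [N HN]]; first by exists 0%N.
  have : ~ io (fun n => Q n t) by move=> Ht; apply: Hn; exists t.
  move=> Ht; have [M HM] : exists M, forall n, (M <= n)%N -> ~ Q n t.
    apply: contrapT => HM; apply: Ht => N'; apply: contrapT => HN'.
    apply: HM; exists N' => n N'n Qn; apply: HN'; by exists n.
  exists (maxn N M) => t'; rewrite in_cons => /orP[/eqP ->|t's] n Nn.
    by apply: HM; exact: leq_trans (leq_maxr _ _) Nn.
  by apply: HN => //; exact: leq_trans (leq_maxl _ _) Nn.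
have [N HN] := Hs (enum T).
have [n Nn [t Qt]] := H N.
by apply: (HN t _ n Nn); rewrite ?mem_enum.
Qed.

Lemma io_or (P Q : nat -> Prop) : io (fun n => P n \/ Q n) -> io P \/ io Q.
Proof.
move=> H; apply: contrapT => HPQ.
have [M HM] : exists M, forall n, (M <= n)%N -> ~ P n.
  apply: contrapT => HM; apply: HPQ; left => N; apply: contrapT => HN.
  apply: HM; exists N => n Nn Pn; apply: HN; by exists n.
have [M' HM'] : exists M, forall n, (M <= n)%N -> ~ Q n.
  apply: contrapT => HM'; apply: HPQ; right => N; apply: contrapT => HN.
  apply: HM'; exists N => n Nn Pn; apply: HN; by exists n.
have [n Mn [Pn|Qn]] := H (maxn M M').
  by apply: (HM n) => //; exact: leq_trans (leq_maxl _ _) Mn.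
by apply: (HM' n) => //; exact: leq_trans (leq_maxr _ _) Mn.
Qed.

Section Machine.
Variables (a b : nat -> bool) (x0 y0 : bool).

Fixpoint mst (n : nat) : bool * bool :=
  match n with
  | 0%N => (x0, y0)
  | n.+1 => let: (x, y) := mst n in
            let x' := x || a n in let y' := y || b n in
            if x' && y' then (false, false) else (x', y')
  end.

Definition mx n := (mst n).1 || a n.
Definition my n := (mst n).2 || b n.
Definition fire n := mx n && my n.

Lemma mst_S n : mst n.+1 = if fire n then (false, false) else (mx n, my n).
Proof. by rewrite /fire /mx /my /=; case: (mst n). Qed.

Lemma mx_src m i : (m <= i)%N -> (mst m).1 = false -> mx i ->
  exists2 j, (m <= j <= i)%N & a j.
Proof.
elim: i => [|i IH] mi xm.
  rewrite leqn0 in mi; move/eqP: mi xm => -> xm; rewrite /mx xm /= => a0.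
  by exists 0%N.
rewrite /mx; case/orP => [xi|ai]; last by exists i.+1 => //; rewrite mi leqnn.
case: (ltnP m i.+1) => [mi'|im].
  move: xi; rewrite mst_S; case: (fire i) => //= xi.
  have [j /andP[mj ji] aj] := IH mi' xm xi.
  by exists j => //; rewrite mj (leq_trans ji).
have E : m = i.+1 by apply/eqP; rewrite eqn_leq mi im.
by move: xi; rewrite -E xm.
Qed.

Lemma my_src m i : (m <= i)%N -> (mst m).2 = false -> my i ->
  exists2 j, (m <= j <= i)%N & b j.
Proof.
elim: i => [|i IH] mi xm.
  rewrite leqn0 in mi; move/eqP: mi xm => -> xm; rewrite /my xm /= => a0.
  by exists 0%N.
rewrite /my; case/orP => [xi|ai]; last by exists i.+1 => //; rewrite mi leqnn.
case: (ltnP m i.+1) => [mi'|im].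
  move: xi; rewrite mst_S; case: (fire i) => //= xi.
  have [j /andP[mj ji] aj] := IH mi' xm xi.
  by exists j => //; rewrite mj (leq_trans ji).
have E : m = i.+1 by apply/eqP; rewrite eqn_leq mi im.
by move: xi; rewrite -E xm.
Qed.

Lemma machine : io fire <-> io a /\ io b.
Proof.
split.
  move=> H; split => N.
    have [i1 Ni1 f1] := H N; have [i2 i12 f2] := H i1.+1.
    have := mx_src i12; rewrite mst_S f1 => /(_ erefl).
    move: f2; rewrite /fire => /andP[x2 _] /(_ x2) [j /andP[ij _] aj].
    by exists j => //; rewrite (leq_trans Ni1) // ltnW.
  have [i1 Ni1 f1] := H N; have [i2 i12 f2] := H i1.+1.
  have := my_src i12; rewrite mst_S f1 => /(_ erefl).
  move: f2; rewrite /fire => /andP[_ y2] /(_ y2) [j /andP[ij _] aj].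
  by exists j => //; rewrite (leq_trans Ni1) // ltnW.
move=> [Ha Hb] N; apply: contrapT => Hn.
have nf : forall i, (N <= i)%N -> fire i = false.
  move=> i Ni; apply/negP => fi; apply: Hn; by exists i.
have mono : forall j i, (N <= j)%N -> (j <= i)%N -> (mx j -> mx i) /\ (my j -> my i).
  move=> j i Nj; elim: i => [|i IH].
    by rewrite leqn0 => /eqP ->.
  rewrite leq_eqVlt => /orP[/eqP ->//|]; rewrite ltnS => ji.
  have [h1 h2] := IH ji; rewrite /mx /my mst_S nf ?(leq_trans Nj ji) //=.
  by split => [/h1 ->|/h2 ->].
have [j1 Nj1 a1] := Ha N; have [j2 Nj2 b2] := Hb N.
have := nf (maxn j1 j2) (leq_trans Nj1 (leq_maxl _ _)).
have [m1 _] := mono j1 (maxn j1 j2) Nj1 (leq_maxl _ _).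
have [_ m2] := mono j2 (maxn j1 j2) Nj2 (leq_maxr _ _).
by rewrite /fire m1 ?m2 // /mx /my ?a1 ?b2 ?orbT.
Qed.

End Machine.

Section Flags.
Variables (K : finType) (kval : K -> rat).
Definition FL := {ffun K -> bool * bool}.

Definition nextF (F : FL) (v1 v2 : rat) : FL :=
  [ffun k => let x := (F k).1 || (kval k <= v1) in
             let y := (F k).2 || (kval k <= v2) in
             if x && y then (false, false) else (x, y)].

Definition firedk (F : FL) (v1 v2 : rat) (k : K) : bool :=
  ((F k).1 || (kval k <= v1)) && ((F k).2 || (kval k <= v2)).

Definition out (F : FL) (v1 v2 : rat) : rat :=
  \big[Order.max/Order.min v1 v2]_(k | firedk F v1 v2 k) kval k.

Definition F0 : FL := [ffun _ => (false, false)].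

Lemma out_ge F v1 v2 k : firedk F v1 v2 k -> kval k <= out F v1 v2.
Proof. move=> fk; exact: (@le_bigmax_cond _ _ _ _ k (firedk F v1 v2) kval fk). Qed.

Lemma out_cases F v1 v2 :
  out F v1 v2 = Order.min v1 v2 \/ exists2 k, firedk F v1 v2 k & out F v1 v2 = kval k.
Proof.
rewrite /out; apply: (big_ind (fun x => x = Order.min v1 v2 \/
   exists2 k, firedk F v1 v2 k & x = kval k)); first by left.
- move=> x y Hx Hy; case: (leP x y) => _; [exact: Hy|exact: Hx].
- by move=> k fk; right; exists k.
Qed.

Variables (k1 k2 : nat -> K).
Definition v1 n := kval (k1 n).
Definition v2 n := kval (k2 n).

Fixpoint Fs (n : nat) : FL :=
  match n with 0%N => F0 | n.+1 => nextF (Fs n) (v1 n) (v2 n) end.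

Lemma Fs_mst k n :
  Fs n k = mst (fun i => kval k <= v1 i) (fun i => kval k <= v2 i) false false n.
Proof.
elim: n => [|n IH]; first by rewrite /= ffunE.
by rewrite /= ffunE IH; case: (mst _ _ _ _ n).
Qed.

Lemma firedk_fire k n : firedk (Fs n) (v1 n) (v2 n) k =
  fire (fun i => kval k <= v1 i) (fun i => kval k <= v2 i) false false n.
Proof. by rewrite /firedk /fire /mx /my Fs_mst. Qed.

Lemma out_io (P : rat -> Prop) : (forall x y, x <= y -> P x -> P y) ->
  io (fun n => P (out (Fs n) (v1 n) (v2 n))) <-> io (fun n => P (v1 n)) /\ io (fun n => P (v2 n)).
Proof.
move=> Pup; split.
  move=> H.
  have : io (fun n => P (Order.min (v1 n) (v2 n)) \/
                      exists k, firedk (Fs n) (v1 n) (v2 n) k /\ P (kval k)).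
    move=> N; have [n Nn Pn] := H N; exists n => //.
    case: (out_cases (Fs n) (v1 n) (v2 n)) => [E|[k fk E]].
      by left; rewrite -E.
    by right; exists k; rewrite -E.
  case/io_or => [Hm|Hk].
    split => N; have [n Nn Pn] := Hm N; exists n => //; apply: Pup Pn.
      by rewrite ge_min lexx.
    by rewrite ge_min lexx orbT.
  have [k Hk'] := pigeon Hk.
  have [k0 _ [_ Pk]] := Hk' 0%N.
  have Hf : io (fire (fun i => kval k <= v1 i) (fun i => kval k <= v2 i) false false).
    move=> N; have [n Nn [fn _]] := Hk' N; exists n => //; by rewrite -firedk_fire.
  have [Ha Hb] := (machine _ _ _ _).1 Hf.
  split => N.
    by have [n Nn an] := Ha N; exists n => //; apply: Pup Pk.
  by have [n Nn an] := Hb N; exists n => //; apply: Pup Pk.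
move=> [H1 H2].
have [ka Ha] := pigeon (Q := fun n k => k1 n = k /\ P (kval k))
   (fun N => let: ex_intro2 n Nn Pn := H1 N in ex_intro2 _ _ n Nn (ex_intro _ (k1 n) (conj erefl Pn))).
have [kb Hb] := pigeon (Q := fun n k => k2 n = k /\ P (kval k))
   (fun N => let: ex_intro2 n Nn Pn := H2 N in ex_intro2 _ _ n Nn (ex_intro _ (k2 n) (conj erefl Pn))).
set k := if kval ka <= kval kb then ka else kb.
have kle : kval k <= kval ka /\ kval k <= kval kb.
  rewrite /k; case: ifPn => h; first by rewrite lexx.
  by rewrite lexx; split => //; rewrite ltW // ltNge.
have Pk : P (kval k).
  have [_ _ [_ Pa]] := Ha 0%N; have [_ _ [_ Pb]] := Hb 0%N.
  by rewrite /k; case: ifP.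
have Hf : io (fire (fun i => kval k <= v1 i) (fun i => kval k <= v2 i) false false).
  apply/machine; split => N.
    have [n Nn [E _]] := Ha N; exists n => //; by rewrite /v1 E (proj1 kle).
  have [n Nn [E _]] := Hb N; exists n => //; by rewrite /v2 E (proj2 kle).
move=> N; have [n Nn fn] := Hf N; exists n => //; apply: Pup Pk.
by apply: out_ge; rewrite firedk_fire.
Qed.

End Flags.

Lemma dist_prod (S1 S2 T : finType) (d1 : {ffun S1 -> rat}) (d2 : {ffun S2 -> rat})
  (g : S1 -> S2 -> T) : is_dist d1 -> is_dist d2 ->
  is_dist [ffun s : S1 * S2 * T => d1 s.1.1 * d2 s.1.2 * (s.2 == g s.1.1 s.1.2)%:R].
Proof.
move=> [h1 s1] [h2 s2]; split.
  by move=> s; rewrite ffunE !mulr_ge0.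
set F := [ffun s : S1 * S2 * T => _].
have -> : \sum_(s : S1 * S2 * T) F s = \sum_(i : S1 * S2) \sum_(t : T) F (i, t).
  by rewrite pair_bigA /=; apply: eq_bigr => -[].
under eq_bigr => s12 _.
  rewrite (eq_bigr (fun t => d1 s12.1 * d2 s12.2 * (if t == g s12.1 s12.2 then 1 else 0)));
    last by move=> t _; rewrite /F ffunE /=; case: eqP.
  rewrite -big_distrr /= -big_mkcond big_pred1_eq mulr1.
  over.
have -> : \sum_(i : S1 * S2) d1 i.1 * d2 i.2 = \sum_(i : S1) \sum_(j : S2) d1 i * d2 j.
  by rewrite pair_bigA /=; apply: eq_bigr => -[].
under eq_bigr => i _ do rewrite -big_distrr /= s2 mulr1.
exact: s1.
Qed.

Section Constr.
Variables (Sigma : finType) (sg : rat) (B1 B2 : PWA Sigma).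
Local Notation S1 := (state B1).
Local Notation S2 := (state B2).

Definition KK := ((S1 * Sigma * S1) + (S2 * Sigma * S2))%type.
Definition kv (k : KK) : rat :=
  match k with inl t => sg * @weight _ B1 t.1.1 t.1.2 t.2 | inr t => sg * @weight _ B2 t.1.1 t.1.2 t.2 end.

Definition SC := (S1 * S2 * {ffun KK -> bool * bool})%type.

Definition wC (s : SC) (a : Sigma) (s' : SC) : rat :=
  sg * out kv s.2 (sg * @weight _ B1 s.1.1 a s'.1.1) (sg * @weight _ B2 s.1.2 a s'.1.2).

Definition initC : {ffun SC -> rat} :=
  [ffun s : SC => init B1 s.1.1 * init B2 s.1.2 * (s.2 == F0 KK)%:R].

Definition transC (s : SC) (a : Sigma) : {ffun SC -> rat} :=
  [ffun s' : SC => @trans _ B1 s.1.1 a s'.1.1 * @trans _ B2 s.1.2 a s'.1.2 *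
     (s'.2 == nextF kv s.2 (sg * @weight _ B1 s.1.1 a s'.1.1) (sg * @weight _ B2 s.1.2 a s'.1.2))%:R].

Lemma initC_dist : is_dist initC.
Proof. exact: (dist_prod (fun _ _ => F0 KK) (init_is_dist B1) (init_is_dist B2)). Qed.

Lemma transC_dist s a : is_dist (transC s a).
Proof.
exact: (dist_prod (fun q1 q2 => nextF kv s.2 (sg * @weight _ B1 s.1.1 a q1) (sg * @weight _ B2 s.1.2 a q2))
   (trans_is_dist s.1.1 a) (trans_is_dist s.1.2 a)).
Qed.

Definition CC : PWA Sigma := @Build_PWA Sigma SC initC transC wC initC_dist transC_dist.

Section Runs.
Variable w : nat -> Sigma.

Definition k1 (r1 : seqT B1) n : KK := inl (r1 n, w n, r1 n.+1).
Definition k2 (r2 : seqT B2) n : KK := inr (r2 n, w n, r2 n.+1).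

Definition gmap (r : seqT B1 * seqT B2) : seqT CC :=
  fun n => ((r.1 n, r.2 n), Fs kv (k1 r.1) (k2 r.2) n).

Lemma C_io (P : rat -> Prop) (r1 : seqT B1) (r2 : seqT B2) : sg * sg = 1 ->
  (forall x y, x <= y -> P x -> P y) ->
  io (fun n => P (sg * @weight _ CC (gmap (r1, r2) n) (w n) (gmap (r1, r2) n.+1))) <->
  io (fun n => P (sg * @weight _ B1 (r1 n) (w n) (r1 n.+1))) /\
  io (fun n => P (sg * @weight _ B2 (r2 n) (w n) (r2 n.+1))).
Proof.
move=> sg1 Pup.
have E : forall n, sg * @weight _ CC (gmap (r1, r2) n) (w n) (gmap (r1, r2) n.+1) =
   out kv (Fs kv (k1 r1) (k2 r2) n) (v1 kv (k1 r1) n) (v2 kv (k2 r2) n).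
  by move=> n; rewrite /= /wC mulrA sg1 mul1r.
split => H.
  apply: (out_io kv (k1 r1) (k2 r2) Pup).1 => N.
  by have [n Nn h] := H N; exists n => //; rewrite -E.
move=> N; have [n Nn h] := (out_io kv (k1 r1) (k2 r2) Pup).2 H N.
by exists n => //; rewrite E.
Qed.

End Runs.
End Constr.

Lemma prod_nat_forall n (c : nat -> bool) :
  \prod_(i < n) ((c i)%:R : rat) = ([forall i : 'I_n, c i])%:R.
Proof.
elim: n => [|n IH].
  by rewrite big_ord0; have -> : [forall i : 'I_0, c i] by apply/forallP => -[].
rewrite big_ord_recr /= IH.
case: (boolP [forall i : 'I_n, c i]) => H1; case: (boolP [forall i : 'I_n.+1, c i]) => H2.
- case: (c n) (forallP H2 ord_max) => //= _; by rewrite mulr1.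
- have : c n = false.
    apply: negbTE; apply: contra H2 => cn; apply/forallP => i.
    case: (ltnP i n) => [lt|ge].
      by have := forallP H1 (Ordinal lt).
    have -> : i = ord_max by apply: val_inj; apply/eqP; rewrite eqn_leq ge -ltnS ltn_ord.
    exact: cn.
  by move=> ->; rewrite mulr0.
- exfalso; move/negP: H1; apply; apply/forallP => i.
  exact: (forallP H2 (widen_ord (leqnSn n) i)).
- by rewrite mul0r.
Qed.

Section ConstrMeas.
Variables (Sigma : finType) (sg : rat) (B1 B2 : PWA Sigma) (R : realType) (w : nat -> Sigma).
Local Notation C := (CC sg B1 B2).

Definition gmapM (r : (RunSpace B1 * RunSpace B2)%type) : RunSpace C := gmap sg w r.

Definition cstep (p : nat -> state C) (i : nat) : bool :=
  (p i.+1).2 == nextF (kv sg (B1:=B1) (B2:=B2)) (p i).2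
        (sg * @weight _ B1 (p i).1.1 (w i) (p i.+1).1.1)
        (sg * @weight _ B2 (p i).1.2 (w i) (p i.+1).1.2).

Definition cons (p : nat -> state C) n : bool :=
  ((p 0%N).2 == F0 (KK B1 B2)) && [forall i : 'I_n, cstep p i].

Lemma gmap_cyl n p : gmapM @^-1` (cyl n.+1 p) =
  if cons p n then cyl n.+1 (fun i => (p i).1.1) `*` cyl n.+1 (fun i => (p i).1.2) else set0.
Proof.
apply/seteqP; split => -[r1 r2] /=.
  move=> H.
  have H1 : forall i, (i < n.+1)%N -> r1 i = (p i).1.1 /\ r2 i = (p i).1.2 /\
      Fs (kv sg (B1:=B1) (B2:=B2)) (k1 B2 w r1) (k2 B1 w r2) i = (p i).2.
    by move=> i ilt; rewrite -(H i ilt).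
  have -> : cons p n.
    apply/andP; split.
      by have [_ [_ <-]] := H1 0%N erefl.
    apply/forallP => i.
    have [a1 [a2 a3]] := H1 i (leqW (ltn_ord i)).
    have [b1 [b2 b3]] := H1 i.+1 (ltn_ord i).
    by rewrite /cstep -a1 -a2 -a3 -b1 -b2 -b3.
  by split => i ilt; case: (H1 i ilt) => // _ [].
case: ifPn => // /andP[/eqP c0 /forallP cS] [/= h1 h2].
have HF : forall i, (i <= n)%N -> Fs (kv sg (B1:=B1) (B2:=B2)) (k1 B2 w r1) (k2 B1 w r2) i = (p i).2.
  elim => [|i IH] ilt; first by rewrite c0.
  rewrite /= IH ?(ltnW ilt) //.
  have := cS (Ordinal ilt) => /eqP /= ->.
  rewrite /v1 /v2 /k1 /k2 /= (h1 i (leqW ilt)) (h1 i.+1 ilt).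
  by rewrite (h2 i (leqW ilt)) (h2 i.+1 ilt).
move=> i ilt; rewrite /gmapM /gmap /= h1 // h2 // HF //.
by case: (p i) => -[].
Qed.

Lemma gmap_meas : measurable_fun setT gmapM.
Proof.
apply: (@measurability _ _ _ _ setT gmapM (@cylinders _ C)); first by [].
move=> _ [B [n [p ->]] <-]; rewrite setTI.
case: n => [|n].
  by rewrite cyl0 preimage_setT.
rewrite gmap_cyl; case: ifP => _ //.
by apply: measurableX; apply: cyl_meas.
Qed.

HB.instance Definition _ := isMeasurableFun.Build _ _ _ _ gmapM gmap_meas.

Variables (P1 : probability (RunSpace B1) R) (P2 : probability (RunSpace B2) R).
Hypotheses (HP1 : is_run_measure w P1) (HP2 : is_run_measure w P2).

Definition PC := distribution (P1 \x P2)%E [mfun of gmapM].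

Lemma PC_run : is_run_measure w PC.
Proof.
move=> n p.
change ((P1 \x P2)%E (gmapM @^-1` cyl n.+1 p) =
  (ratr (init C (p 0%N) * \prod_(i < n) @trans _ C (p i) (w i) (p i.+1)))%:E).
rewrite gmap_cyl.
have E : init C (p 0%N) * \prod_(i < n) @trans _ C (p i) (w i) (p i.+1) =
   (init B1 (p 0%N).1.1 * \prod_(i < n) @trans _ B1 (p i).1.1 (w i) (p i.+1).1.1) *
   (init B2 (p 0%N).1.2 * \prod_(i < n) @trans _ B2 (p i).1.2 (w i) (p i.+1).1.2) *
   (cons p n)%:R.
  rewrite /= /initC /transC ffunE.
  under eq_bigr do rewrite ffunE.
  rewrite !big_split /= (prod_nat_forall n (cstep p)) /cons -mulnb natrM.
  set a := init B1 _; set b := init B2 _; set c := ((_ == _)%:R).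
  ring.
rewrite E; case: ifP => _.
  rewrite product_measure1E; last by apply: cyl_meas.
    apply: (etrans (f_equal2 (fun x y => (x * y)%E) (HP1 n (fun i => (p i).1.1))
                                               (HP2 n (fun i => (p i).1.2)))).
    by rewrite mulr1n mulr1 [in RHS]rmorphM /= EFinM.
  by apply: cyl_meas.
by rewrite mulr0 rmorph0 measure0.
Qed.

End ConstrMeas.

Section Events.
Variables (Sigma : finType) (B1 B2 : PWA Sigma) (R : realType) (w : nat -> Sigma).
Local Notation C := (CC 1 B1 B2).

Lemma Esup_io1 (B : PWA Sigma) (eta : R) (r : seqT B) :
  @Esup _ B R w eta r <-> io (fun n => eta <= ratr (1 * @weight _ B (r n) (w n) (r n.+1))).
Proof.
rewrite Esup_io; split => H N; have [n Nn h] := H N; exists n => //.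
  by rewrite mul1r.
by move: h; rewrite mul1r.
Qed.

Lemma gmap_Esup (eta : R) :
  gmapM 1 w @^-1` (@Esup _ C R w eta) = @Esup _ B1 R w eta `*` @Esup _ B2 R w eta.
Proof.
have Pup : forall x y : rat, x <= y -> eta <= ratr x -> eta <= ratr y.
  by move=> x y xy ex; apply: (le_trans ex); rewrite ler_rat.
apply/seteqP; split => -[r1 r2] /=.
  move/Esup_io1 => H.
  have [H1 H2] := (C_io w r1 r2 (mulr1 1) Pup).1 H.
  by split; apply/Esup_io1.
move=> [/Esup_io1 H1 /Esup_io1 H2]; apply/Esup_io1.
exact: (C_io w r1 r2 (mulr1 1) Pup).2.
Qed.

Lemma PC_Esup (P1 : probability (RunSpace B1) R) (P2 : probability (RunSpace B2) R) eta :
  PC (sg := 1) w P1 P2 (@Esup _ C R w eta) = (P1 (@Esup _ B1 R w eta) * P2 (@Esup _ B2 R w eta))%E.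
Proof.
change ((P1 \x P2)%E (gmapM 1 w @^-1` (@Esup _ C R w eta)) =
   (P1 (@Esup _ B1 R w eta) * P2 (@Esup _ B2 R w eta))%E).
rewrite gmap_Esup product_measure1E //; exact: Esup_meas.
Qed.

End Events.

Lemma Einf_nio (Sigma : finType) (B : PWA Sigma) (R : realType) w (eta : R) (r : seqT B) :
  @Einf _ B R w eta r <-> ~ io (fun n => wval R (r n, w n, r n.+1) < eta).
Proof.
rewrite Einf_ev; split.
  move=> [N HN] H; have [n Nn] := H N; by rewrite ltNge HN.
move=> H; apply: contrapT => H2; apply: H => N; apply: contrapT => H3; apply: H2.
exists N => n Nn; rewrite leNgt; apply/negP => h; apply: H3; by exists n.
Qed.

Section Events2.
Variables (Sigma : finType) (A1 A2 : PWA Sigma) (R : realType) (w : nat -> Sigma).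
Local Notation D := (CC (-1) A1 A2).

Lemma gmap_Einf (eta : R) :
  gmapM (-1) w @^-1` (~` (@Einf _ D R w eta)) =
  ~` (@Einf _ A1 R w eta) `*` ~` (@Einf _ A2 R w eta).
Proof.
have Pup : forall x y : rat, x <= y -> - eta < ratr x -> - eta < ratr y.
  by move=> x y xy ex; apply: (lt_le_trans ex); rewrite ler_rat.
have E2 : forall (B : PWA Sigma) (r : seqT B), ~ @Einf _ B R w eta r <->
    io (fun n => - eta < ratr ((-1) * @weight _ B (r n) (w n) (r n.+1))).
  move=> B r; rewrite Einf_nio; split.
    move=> /contrapT H N; have [n Nn h] := H N; exists n => //.
    by rewrite mulN1r rmorphN ltrN2.
  move=> H []; move=> N; have [n Nn h] := H N; exists n => //.
  by move: h; rewrite mulN1r rmorphN ltrN2.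
have s1 : (-1) * (-1) = 1 :> rat by rewrite mulrNN mulr1.
apply/seteqP; split => -[r1 r2] /=.
  move/E2/(C_io w r1 r2 s1 Pup).1 => [h1 h2].
  by split; apply/E2.
move=> [/E2 h1 /E2 h2]; apply/E2; exact: (C_io w r1 r2 s1 Pup).2.
Qed.

Lemma PC_Einf (P1 : probability (RunSpace A1) R) (P2 : probability (RunSpace A2) R) eta :
  PC (sg := -1) w P1 P2 (~` @Einf _ D R w eta) =
  (P1 (~` @Einf _ A1 R w eta) * P2 (~` @Einf _ A2 R w eta))%E.
Proof.
change ((P1 \x P2)%E (gmapM (-1) w @^-1` (~` @Einf _ D R w eta)) =
   (P1 (~` @Einf _ A1 R w eta) * P2 (~` @Einf _ A2 R w eta))%E).
rewrite gmap_Einf product_measure1E //; apply: measurableC; exact: Einf_meas.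
Qed.

End Events2.


Lemma prob1_compl d (T : measurableType d) (R : realType) (P : probability T R) (E : set T) :
  measurable E -> P E = 1%E <-> P (~` E) = 0%E.
Proof.
move=> mE; rewrite probability_setC //.
have : (P E) \is a fin_num.
  rewrite ge0_fin_numE //; apply: (le_lt_trans (probability_le1 P mE)); exact: ltry.
case: (P E) => [x| |] // _.
rewrite -EFinB; split => [[->]|[]]; first by rewrite subrr.
by move/eqP; rewrite subr_eq0 => /eqP <-.
Qed.

Lemma sup_union (R : realType) (S1 S2 : set R) :
  ereal_sup [set x%:E | x in S1 `|` S2] =
  Order.max (ereal_sup [set x%:E | x in S1]) (ereal_sup [set x%:E | x in S2]).
Proof.
apply/eqP; rewrite eq_le; apply/andP; split.
  apply: ub_ereal_sup => _ [x [S1x|S2x] <-].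
    by rewrite le_max; apply/orP; left; apply: ereal_sup_ubound; exists x.
  by rewrite le_max; apply/orP; right; apply: ereal_sup_ubound; exists x.
rewrite ge_max; apply/andP; split; apply: le_ereal_sup => _ [x Sx <-]; exists x => //.
  by left.
by right.
Qed.

Lemma sup_inter (R : realType) (S1 S2 : set R) :
  (forall x y, y <= x -> S1 x -> S1 y) -> (forall x y, y <= x -> S2 x -> S2 y) ->
  ereal_sup [set x%:E | x in S1 `&` S2] =
  Order.min (ereal_sup [set x%:E | x in S1]) (ereal_sup [set x%:E | x in S2]).
Proof.
move=> D1 D2; apply/eqP; rewrite eq_le; apply/andP; split.
  by rewrite le_min; apply/andP; split; apply: le_ereal_sup => _ [x [S1x S2x] <-];
    exists x.
rewrite leNgt; apply/negP => H.
have H1 : (ereal_sup [set x%:E | x in S1 `&` S2] < ereal_sup [set x%:E | x in S1])%E.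
  by apply: (lt_le_trans H); rewrite ge_min lexx.
have H2 : (ereal_sup [set x%:E | x in S1 `&` S2] < ereal_sup [set x%:E | x in S2])%E.
  by apply: (lt_le_trans H); rewrite ge_min lexx orbT.
have [_ [x1 S1x1 <-] l1] := ereal_sup_gt H1.
have [_ [x2 S2x2 <-] l2] := ereal_sup_gt H2.
set x := Order.min x1 x2.
have Ix : (S1 `&` S2) x.
  split; [apply: (D1 x1) => //; rewrite ge_min lexx //|apply: (D2 x2) => //; rewrite ge_min lexx orbT //].
have : ((x%:E) <= ereal_sup [set x%:E | x in S1 `&` S2])%E.
  by apply: ereal_sup_ubound; exists x.
rewrite leNgt; apply/negP; rewrite negbK /x.
by case: (leP x1 x2) => _.
Qed.

Lemma mule_gt0_iff (R : realType) (x y : \bar R) : (0 <= x)%E -> (0 <= y)%E ->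
  (0 < x * y)%E <-> (0 < x)%E /\ (0 < y)%E.
Proof.
move=> x0 y0; split; last by move=> [h1 h2]; exact: mule_gt0.
rewrite !lt_def mule_eq0 negb_or x0 y0 !andbT => /andP[/andP[-> ->] _] //.
Qed.

Lemma Esup_anti (Sigma : finType) (A : PWA Sigma) (R : realType) w (x y : R) :
  y <= x -> @Esup _ A R w x `<=` @Esup _ A R w y.
Proof. by move=> yx r /= h; apply: le_trans h; rewrite lee_fin. Qed.

Lemma Spos_down (Sigma : finType) (A : PWA Sigma) (R : realType) w
  (P : probability (RunSpace A) R) :
  forall x y : R, y <= x -> (0 < P (@Esup _ A R w x))%E -> (0 < P (@Esup _ A R w y))%E.
Proof.
move=> x y yx h; apply: (lt_le_trans h); apply: le_measure.
- by rewrite inE; exact: Esup_meas.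
- by rewrite inE; exact: Esup_meas.
- exact: Esup_anti.
Qed.

Theorem part1 (R : realType) (Sigma : finType) (A1 A2 : PWA Sigma) (w : nat -> Sigma) :
  L_PosLimSup R (CC 1 A1 A2) w = Order.min (L_PosLimSup R A1 w) (L_PosLimSup R A2 w).
Proof.
have [P1 HP1] := run_measure_exists A1 R w.
have [P2 HP2] := run_measure_exists A2 R w.
rewrite /L_PosLimSup (L_pos_char (PC_run HP1 HP2)) (L_pos_char HP1) (L_pos_char HP2).
rewrite -sup_inter; [|exact: Spos_down|exact: Spos_down].
congr (ereal_sup [set _%:E | _ in _]); apply/seteqP; split => eta h.
  have h' : (0 < P1 (Esup w eta) * P2 (Esup w eta))%E.
    by rewrite -(PC_Esup w P1 P2 eta); exact: h.
  by move/mule_gt0_iff : h' => -[] //; apply: measure_ge0; exact: Esup_meas.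
have h' : (0 < P1 (Esup w eta) * P2 (Esup w eta))%E.
  by move: h => [h1 h2]; exact: mule_gt0.
by move: h'; rewrite -(PC_Esup w P1 P2 eta).
Qed.

Theorem part2 (R : realType) (Sigma : finType) (A1 A2 : PWA Sigma) (w : nat -> Sigma) :
  L_AsLimInf R (CC (-1) A1 A2) w =
  Order.max (L_AsLimInf R A1 w) (L_AsLimInf R A2 w).
Proof.
have [P1 HP1] := run_measure_exists A1 R w.
have [P2 HP2] := run_measure_exists A2 R w.
have HD := PC_run (sg := -1) HP1 HP2.
rewrite /L_AsLimInf (L_as_char HD) (L_as_char HP1) (L_as_char HP2).
rewrite -sup_union.
have key : forall eta : R, PC (sg := -1) w P1 P2 (@Einf _ (CC (-1) A1 A2) R w eta) = 1%E <->
   P1 (@Einf _ A1 R w eta) = 1%E \/ P2 (@Einf _ A2 R w eta) = 1%E.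
  move=> eta.
  have E := PC_Einf w P1 P2 eta.
  rewrite (prob1_compl _ (Einf_meas _ _)) (prob1_compl _ (Einf_meas _ _)).
  rewrite (prob1_compl _ (Einf_meas _ _)).
  split => h.
    have h1 := etrans (esym E) h.
    by move/eqP: h1; rewrite mule_eq0 => /orP[/eqP ->|/eqP ->]; [left|right].
  apply: (etrans E).
  by case: h => ->; rewrite ?mul0e ?mule0.
congr (ereal_sup [set _%:E | _ in _]); apply/seteqP; split => eta h.
  by apply/key; exact: h.
by apply/key; exact: h.
Qed.

Theorem lemma18 (R : realType) (Sigma : finType) :
  (forall A1 A2 : PWA Sigma, exists A : PWA Sigma, forall w : nat -> Sigma,
     L_PosLimSup R A w =
     Order.min (L_PosLimSup R A1 w) (L_PosLimSup R A2 w)) /\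
  (forall A1 A2 : PWA Sigma, exists A : PWA Sigma, forall w : nat -> Sigma,
     L_AsLimInf R A w =
     Order.max (L_AsLimInf R A1 w) (L_AsLimInf R A2 w)).
Proof.
split => A1 A2.
  by exists (CC 1 A1 A2) => w; exact: part1.
by exists (CC (-1) A1 A2) => w; exact: part2.
Qed.
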